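(* Let $\lambda$ be an infinite cardinal and let $(\mathscr T,\bar{\mathbf I})$ be a $\lambda^+$-complete tagged tree. Suppose $\lim(\mathscr T)=\bigcup_{\alpha<\lambda}\mathbb B_\alpha$, where each $\mathbb B_\alpha$ is a Borel subset of $\lim(\mathscr T)$. Then there are $\alpha<\lambda$ and a tree $\mathscr T^\dagger$ with $(\mathscr T,\bar{\mathbf I})\le^*(\mathscr T^\dagger,\bar{\mathbf I})$ and $\lim(\mathscr T^\dagger)\subseteq\mathbb B_\alpha$. In particular, if $\mathbf H$ is a function on $\lim(\mathscr T)$ with $|\mathrm{Rang}(\mathbf H)|\le\lambda$ and every fiber $\mathbf H^{-1}(\{x\})$ Borel, then there is $\mathscr T^\dagger$ with $(\mathscr T,\bar{\mathbf I})\le^*(\mathscr T^\dagger,\bar{\mathbf I})$ such that $\mathbf H$ is constant on $\lim(\mathscr T^\dagger)$.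
   Context: A tree is a nonempty set $\mathscr T$ of finite sequences of ordinals, closed under initial segments, such that every $\eta\in\mathscr T$ has at least one immediate successor in $\mathscr T$; $\mathrm{Succ}_{\mathscr T}(\eta)=\{\eta^\frown\langle\alpha\rangle:\eta^\frown\langle\alpha\rangle\in\mathscr T\}$. $\lim(\mathscr T)$ is the set of $\omega$-sequences of ordinals all of whose finite initial segments lie in $\mathscr T$, with the topology whose basic open sets are $\{\nu\in\lim(\mathscr T):\eta\triangleleft\nu\}$ for $\eta\in\mathscr T$; ''Borel'' refers to this topology. An ideal on a set $X$ is a family of subsets of $X$ containing all singletons, closed under subsets and finite unions, and not containing $X$; it is $\mu$-complete if closed under unions of fewer than $\mu$ members. A tagged tree is a pair $(\mathscr T,\bar{\mathbf I})$ where $\mathscr T$ is a tree and $\bar{\mathbf I}$ assigns to some (possibly all) $\eta\in\mathscr T$ an ideal $\mathbf I_\eta$ on a set $\mathrm{Dom}(\mathbf I_\eta)\supseteq\mathrm{Succ}_{\mathscr T}(\eta)$. The tagged tree is $\mu$-complete if every defined $\mathbf I_\eta$ ($\eta\in\mathscr T$) is $\mu$-complete. $\eta\in\mathscr T$ is a splitting point of $(\mathscr T,\bar{\mathbf I})$ if $\mathbf I_\eta$ is defined and $\mathrm{Succ}_{\mathscr T}(\eta)\notin\mathbf I_\eta$. For trees $\mathscr T'\subseteq\mathscr T$, $(\mathscr T,\bar{\mathbf I})\le^*(\mathscr T',\bar{\mathbf I})$ means: for every $\eta\in\mathscr T'$ which is a splitting point of $(\mathscr T,\bar{\mathbf I})$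 we have $\mathrm{Succ}_{\mathscr T'}(\eta)\notin\mathbf I_\eta$ (so the splitting points of $(\mathscr T',\bar{\mathbf I})$ are exactly the splitting points of $(\mathscr T,\bar{\mathbf I})$ lying in $\mathscr T'$). *)

(* Defs.v *)
From Stdlib Require Import List.
Import ListNotations.

Set Implicit Arguments.

Section Trees.
Variable O : Type.

Definition tree (T : list O -> Prop) : Prop :=
  (exists eta, T eta) /\
  (forall eta nu, T (eta ++ nu) -> T eta) /\
  (forall eta, T eta -> exists a, T (eta ++ [a])).

Definition Succ (T : list O -> Prop) (eta : list O) : list O -> Prop :=
  fun s => exists a, s = eta ++ [a] /\ T (eta ++ [a]).

Definition restr (x : nat -> O) (n : nat) : list O := map x (seq 0 n).

Definition is_init (eta : list O) (x : nat -> O) : Prop :=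
  eta = restr x (length eta).

Definition lim (T : list O -> Prop) (x : nat -> O) : Prop :=
  forall n, T (restr x n).

(* open subsets of lim(T): unions of basic open sets *)
Definition open_set_of (T : list O -> Prop) (N : list O -> Prop)
  : (nat -> O) -> Prop :=
  fun x => lim T x /\ exists eta, N eta /\ T eta /\ is_init eta x.

(* Borel subsets of lim(T) (predicates are read as subsets of lim T, i.e.
   up to agreement on lim T): the least sigma-algebra of subsets of lim(T)
   containing the open sets. *)
Definition Borel (T : list O -> Prop) (B : (nat -> O) -> Prop) : Prop :=
  forall S : ((nat -> O) -> Prop) -> Prop,
    (forall N, S (open_set_of T N)) ->
    (forall A, S A -> S (fun x => lim T x /\ ~ A x)) ->
    (forall F : nat -> (nat -> O) -> Prop,
        (forall n, S (F n)) -> S (fun x => exists n, F n x)) ->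
    (forall A A', S A -> (forall x, lim T x -> (A x <-> A' x)) -> S A') ->
    S B.

Definition ideal (X : list O -> Prop) (I : (list O -> Prop) -> Prop) : Prop :=
  (forall A, I A -> forall s, A s -> X s) /\
  (forall s, X s -> I (fun t => t = s)) /\
  (forall A B, I A -> (forall s, B s -> A s) -> I B) /\
  (forall A B, I A -> I B -> I (fun s => A s \/ B s)) /\
  ~ I X.

(* mu-complete with mu = lambda^+, lambda = |L|: closed under unions of
   families indexed by sets of cardinality <= lambda *)
Definition succ_complete (L : Type) (I : (list O -> Prop) -> Prop) : Prop :=
  forall (J : Type) (f : J -> L),
    (forall j j', f j = f j' -> j = j') ->
    forall A : J -> list O -> Prop,
      (forall j, I (A j)) -> I (fun s => exists j, A j s).

(* A tagged tree: Idef eta says I_eta is defined, Dom eta = Dom(I_eta),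
   I eta = I_eta. *)
Definition tagged_tree (T : list O -> Prop) (Idef : list O -> Prop)
  (Dom : list O -> list O -> Prop) (I : list O -> (list O -> Prop) -> Prop)
  : Prop :=
  tree T /\
  forall eta, T eta -> Idef eta ->
    ideal (Dom eta) (I eta) /\ (forall s, Succ T eta s -> Dom eta s).

Definition tagged_complete (L : Type) (T : list O -> Prop)
  (Idef : list O -> Prop) (I : list O -> (list O -> Prop) -> Prop) : Prop :=
  forall eta, T eta -> Idef eta -> succ_complete L (I eta).

Definition splitting (T : list O -> Prop) (Idef : list O -> Prop)
  (I : list O -> (list O -> Prop) -> Prop) (eta : list O) : Prop :=
  T eta /\ Idef eta /\ ~ I eta (Succ T eta).

Definition le_star (T : list O -> Prop) (Idef : list O -> Prop)
  (I : list O -> (list O -> Prop) -> Prop) (T' : list O -> Prop) : Prop :=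
  (forall eta, T' eta -> T eta) /\
  (forall eta, T' eta -> splitting T Idef I eta -> ~ I eta (Succ T' eta)).

End Trees.

(* Main.v *)
Require Import Defs.
From Stdlib Require Import List Arith Lia Classical ClassicalEpsilon Cantor.
Import ListNotations.

Lemma restr_length {O} (x : nat -> O) n : length (restr x n) = n.
Proof. unfold restr. rewrite length_map, length_seq. reflexivity. Qed.

Lemma restr_S {O} (x : nat -> O) n : restr x (S n) = restr x n ++ [x n].
Proof. unfold restr. rewrite seq_S, map_app. reflexivity. Qed.

Lemma firstn_restr {O} (x : nat -> O) j n : j <= n -> firstn j (restr x n) = restr x j.
Proof.
  intros H. induction n.
  - assert (j = 0) by lia. subst. reflexivity.
  - destruct (Nat.eq_dec j (S n)).
    + subst. rewrite firstn_all2; [reflexivity| rewrite restr_length; lia].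
    + rewrite restr_S, firstn_app, restr_length.
      replace (j - n) with 0 by lia. rewrite app_nil_r. apply IHn. lia.
Qed.

Lemma nth_restr {O} (x : nat -> O) i n d : i < n -> nth i (restr x n) d = x i.
Proof.
  intros H. unfold restr. rewrite nth_indep with (d' := x 0) by (rewrite length_map, length_seq; lia).
  rewrite map_nth, seq_nth by lia. reflexivity.
Qed.

Lemma restr_shift {O} (w : nat -> O) m : restr w (S m) = w 0 :: restr (fun i => w (S i)) m.
Proof.
  unfold restr. simpl. f_equal. rewrite <- seq_shift, map_map. reflexivity.
Qed.

Lemma restr_ext {O} (x y : nat -> O) n : (forall i, i < n -> x i = y i) -> restr x n = restr y n.
Proof.
  intros H. unfold restr. apply map_ext_in. intros a Ha. apply in_seq in Ha. apply H. lia.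
Qed.

Lemma bound_lemma (f : nat -> nat) j : exists m, j <= m /\ forall i, i < j -> f i < m.
Proof.
  induction j.
  - exists 0. split; [lia| intros; lia].
  - destruct IHj as [m0 [H1 H2]]. exists (S (Nat.max m0 (f j))). split; [lia|].
    intros i Hi. destruct (Nat.eq_dec i j); [subst; lia|]. specialize (H2 i). lia.
Qed.

Fixpoint enc (l : list nat) : nat :=
  match l with [] => 0 | a :: r => S (to_nat (a, enc r)) end.

Lemma enc_inj : forall l l', enc l = enc l' -> l = l'.
Proof.
  induction l; destruct l'; simpl; intros H; try discriminate; auto.
  assert (H' : to_nat (a, enc l) = to_nat (n, enc l')) by (injection H; auto).
  apply (f_equal of_nat) in H'. rewrite !cancel_of_to in H'.
  injection H' as -> H'. f_equal. auto.
Qed.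



Definition strat (O : Type) := list O -> list nat -> list O -> Prop.

Inductive Wg {O} (T Idef : list O -> Prop) (I : list O -> (list O -> Prop) -> Prop)
  (K : list O -> list nat -> Prop) : list O -> list nat -> Prop :=
| WK nu d : ~ K nu d -> Wg T Idef I K nu d
| WS nu d (Z : list O -> Prop) : splitting T Idef I nu -> I nu Z ->
    (forall a k, T (nu ++ [a]) -> ~ Z (nu ++ [a]) -> Wg T Idef I K (nu ++ [a]) (d ++ [k])) ->
    Wg T Idef I K nu d
| WN nu d : (forall a k, T (nu ++ [a]) -> Wg T Idef I K (nu ++ [a]) (d ++ [k])) ->
    Wg T Idef I K nu d.

Definition Ival {O} (T Idef : list O -> Prop) (I : list O -> (list O -> Prop) -> Prop)
  (s : strat O) := forall nu d, splitting T Idef I nu -> I nu (s nu d).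

Definition wins {O} (T Idef : list O -> Prop) (I : list O -> (list O -> Prop) -> Prop)
  (K : list O -> list nat -> Prop) (s : strat O) (nu : list O) (d : list nat) :=
  forall (x : nat -> O) (w : nat -> nat) n, lim T x -> restr x n = nu -> restr w n = d ->
    (forall m, n <= m -> splitting T Idef I (restr x m) ->
       ~ s (restr x m) (restr w m) (restr x (S m))) ->
    exists m, n <= m /\ ~ K (restr x m) (restr w m).

Lemma A_side {O} (T Idef : list O -> Prop) (Dom : list O -> list O -> Prop)
  (I : list O -> (list O -> Prop) -> Prop) (K : list O -> list nat -> Prop)
  (Iemp : forall nu, splitting T Idef I nu -> I nu (fun _ => False))
  (Isub : forall nu A B, splitting T Idef I nu -> I nu A -> (forall t, B t -> A t) -> I nu B)
  (Iun : forall nu A B, splitting T Idef I nu -> I nu A -> I nu B -> I nu (fun t => A t \/ B t)) :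
  forall nu d, Wg T Idef I K nu d -> exists s, Ival T Idef I s /\ wins T Idef I K s nu d.
Proof.
  assert (Hemp : Ival T Idef I (fun _ _ _ => False)).
  { intros nu d Hs. apply Iemp; auto. }
  assert (Comb : forall nu d (Z : list O -> Prop) (P : list O -> Prop),
     (forall a k, P (nu ++ [a]) -> exists s, Ival T Idef I s /\ wins T Idef I K s (nu ++ [a]) (d ++ [k])) ->
     exists F : list O -> nat -> strat O, forall s k, Ival T Idef I (F s k) /\
        (forall a, s = nu ++ [a] -> P s -> wins T Idef I K (F s k) s (d ++ [k]))).
  { intros nu d Z P IH.
    assert (H : forall s k, exists f, Ival T Idef I f /\
        (forall a, s = nu ++ [a] -> P s -> wins T Idef I K f s (d ++ [k]))).
    { intros s k. destruct (classic (exists a, s = nu ++ [a] /\ P s)) as [[a [-> Ha]]|Hn].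
      - destruct (IH a k Ha) as [f [H1 H2]]. exists f. split; [exact H1|].
        intros a' Ha' _. apply app_inj_tail in Ha' as [_ <-]. auto.
      - exists (fun _ _ _ => False). split; [exact Hemp|]. intros a Ha HP. exfalso; eauto. }
    exists (fun s k => proj1_sig (constructive_indefinite_description _ (H s k))).
    intros s k. exact (proj2_sig (constructive_indefinite_description _ (H s k))). }
  intros nu d HW. induction HW as [nu d HK|nu d Z Hsp HZ Hsub IH|nu d Hsub IH].
  - exists (fun _ _ _ => False). split; auto.
    intros x w n Hx Hn Hw _. exists n. split; auto. rewrite Hn, Hw. auto.
  - destruct (Comb nu d Z (fun s => T s /\ ~ Z s)) as [F HF].
    { intros a k [H1 H2]. apply IH; auto. }
    exists (fun nu' d' t => (nu' = nu /\ d' = d /\ Z t) \/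
      (length nu < length nu' /\ F (firstn (S (length nu)) nu') (nth (length d) d' 0) nu' d' t)).
    split.
    + intros nu' d' Hs'. destruct (classic (nu' = nu /\ d' = d)) as [[-> ->]|Hne].
      * apply Isub with (A := fun t => Z t \/ F (firstn (S (length nu)) nu) (nth (length d) d 0) nu d t); auto.
        -- apply Iun; auto. apply (proj1 (HF _ _)); auto.
        -- intros t [[_ [_ Ht]]|[_ Ht]]; auto.
      * apply Isub with (A := F (firstn (S (length nu)) nu') (nth (length d) d' 0) nu' d'); auto.
        -- apply (proj1 (HF _ _)); auto.
        -- intros t [[? [? _]]|[_ Ht]]; auto. exfalso; auto.
    + intros x w n Hx Hn Hw Hc.
      assert (Hl : length nu = n) by (rewrite <- Hn; apply restr_length).
      assert (Hld : length d = n) by (rewrite <- Hw; apply restr_length).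
      assert (HnZ : ~ Z (restr x (S n))).
      { intros HZ'. apply (Hc n (le_n n)). rewrite Hn; auto. left. rewrite Hn, Hw. auto. }
      set (s := restr x (S n)) in *.
      assert (Hs : s = nu ++ [x n]) by (unfold s; rewrite restr_S, Hn; auto).
      destruct (HF s (w n)) as [_ Hwin].
      assert (HP : T s /\ ~ Z s) by (split; auto; apply Hx).
      destruct (Hwin (x n) Hs HP x w (S n) Hx eq_refl) as [m [Hm1 Hm2]].
      * rewrite restr_S, Hw. reflexivity.
      * intros m Hm Hsm HF'. apply (Hc m ltac:(lia) Hsm). right. split.
        -- rewrite restr_length; lia.
        -- rewrite Hl, Hld, firstn_restr by lia. rewrite nth_restr by lia. exact HF'.
      * exists m. split; [lia|auto].
  - destruct (Comb nu d (fun _ => False) T) as [F HF].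
    { intros a k H1. apply IH; auto. }
    exists (fun nu' d' t =>
      (length nu < length nu' /\ F (firstn (S (length nu)) nu') (nth (length d) d' 0) nu' d' t)).
    split.
    + intros nu' d' Hs'.
      apply Isub with (A := F (firstn (S (length nu)) nu') (nth (length d) d' 0) nu' d'); auto.
      * apply (proj1 (HF _ _)); auto.
      * intros t [_ Ht]; auto.
    + intros x w n Hx Hn Hw Hc.
      assert (Hl : length nu = n) by (rewrite <- Hn; apply restr_length).
      assert (Hld : length d = n) by (rewrite <- Hw; apply restr_length).
      set (s := restr x (S n)) in *.
      assert (Hs : s = nu ++ [x n]) by (unfold s; rewrite restr_S, Hn; auto).
      destruct (HF s (w n)) as [_ Hwin].
      assert (HP : T s) by apply Hx.
      destruct (Hwin (x n) Hs HP x w (S n) Hx eq_refl) as [m [Hm1 Hm2]].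
      * rewrite restr_S, Hw. reflexivity.
      * intros m Hm Hsm HF'. apply (Hc m ltac:(lia) Hsm). split.
        -- rewrite restr_length; lia.
        -- rewrite Hl, Hld, firstn_restr by lia. rewrite nth_restr by lia. exact HF'.
      * exists m. split; [lia|auto].
Qed.

Fixpoint dh {O} (kc : list nat -> list O -> nat) (pre rest : list O) (d : list nat) : list nat :=
  match rest with
  | [] => d
  | a :: r => dh kc (pre ++ [a]) r (d ++ [kc d (pre ++ [a])])
  end.

Lemma dh_app {O} kc (r : list O) : forall pre d a,
  dh kc pre (r ++ [a]) d = dh kc pre r d ++ [kc (dh kc pre r d) (pre ++ r ++ [a])].
Proof.
  induction r as [|b r IH]; intros pre d a; simpl.
  - reflexivity.
  - rewrite IH. rewrite <- app_assoc. reflexivity.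
Qed.

Lemma app_last_split {O} (eta eta1 eta2 : list O) a :
  eta ++ [a] = eta1 ++ eta2 -> eta1 = eta ++ [a] \/ exists e2, eta = eta1 ++ e2.
Proof.
  intros H. destruct eta2 as [|c r].
  - left. rewrite app_nil_r in H. auto.
  - destruct (exists_last (l := c :: r) ltac:(discriminate)) as [e2 [b Hb]].
    rewrite Hb in H. right. exists e2. rewrite app_assoc in H. apply app_inj_tail in H. tauto.
Qed.

Lemma B_side {O} (T Idef : list O -> Prop)
  (I : list O -> (list O -> Prop) -> Prop) (K : list O -> list nat -> Prop)
  (HT : forall eta nu, T (eta ++ nu) -> T eta) (HT0 : T []) :
  ~ Wg T Idef I K [] [] ->
  exists T' : list O -> Prop, tree T' /\ le_star T Idef I T' /\
    forall x, lim T' x -> exists w : nat -> nat, forall n, K (restr x n) (restr w n).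
Proof.
  intros H0.
  set (kc := fun (d : list nat) (s : list O) =>
    epsilon (inhabits 0) (fun k => ~ Wg T Idef I K s (d ++ [k]))).
  assert (Hkc : forall d s, (exists k, ~ Wg T Idef I K s (d ++ [k])) -> ~ Wg T Idef I K s (d ++ [kc d s])).
  { intros d s Hex. exact (epsilon_spec (inhabits 0) (fun k => ~ Wg T Idef I K s (d ++ [k])) Hex). }
  set (D := fun eta => dh kc [] eta []).
  assert (HD : forall eta a, D (eta ++ [a]) = D eta ++ [kc (D eta) (eta ++ [a])]).
  { intros eta a. unfold D. rewrite dh_app. reflexivity. }
  assert (HDl : forall eta, length (D eta) = length eta).
  { intros eta. induction eta as [|a eta IH] using rev_ind; [reflexivity|].
    rewrite HD, !length_app, IH. reflexivity. }
  set (q := fun eta => T eta /\ forall e1 e2, eta = e1 ++ e2 -> ~ Wg T Idef I K e1 (D e1)).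
  assert (Hq0 : forall eta, q eta -> ~ Wg T Idef I K eta (D eta)).
  { intros eta [_ H]. apply (H eta []). rewrite app_nil_r; auto. }
  assert (Hqext : forall eta a, q eta -> T (eta ++ [a]) ->
      ~ Wg T Idef I K (eta ++ [a]) (D (eta ++ [a])) -> q (eta ++ [a])).
  { intros eta a [Ht Hq] Ht' Hn. split; auto. intros e1 e2 He.
    destruct (app_last_split _ _ _ _ He) as [->|[e3 ->]]; auto. apply (Hq e1 e3). auto. }
  assert (Hsucc : forall eta a, q eta -> T (eta ++ [a]) ->
      (exists k, ~ Wg T Idef I K (eta ++ [a]) (D eta ++ [k])) -> q (eta ++ [a])).
  { intros eta a Hq Ht Hex. apply Hqext; auto. rewrite HD. apply Hkc. auto. }
  exists q. split; [|split].
  - split; [|split].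
    + exists []. split.
      * exact HT0.
      * intros e1 e2 He. symmetry in He. apply app_eq_nil in He as [-> _]. auto.
    + intros eta nu [Ht Hq]. split; [eapply HT; eauto|].
      intros e1 e2 ->. apply (Hq e1 (e2 ++ nu)). rewrite app_assoc. auto.
    + intros eta Hq.
      assert (Hn := Hq0 eta Hq).
      apply NNPP. intros Hno. apply Hn. apply WN. intros a k Ht. apply NNPP. intros Hw.
      apply Hno. exists a. apply Hsucc; eauto.
  - split.
    + intros eta [Ht _]. auto.
    + intros eta Hq [Ht [Hid Hns]] HI. apply (Hq0 eta Hq).
      apply (WS _ _ _ _ eta (D eta) (Succ q eta)); [split; auto| exact HI|].
      intros a k Ht' HnS. apply NNPP. intros Hw. apply HnS.
      exists a. split; auto. apply Hsucc; eauto.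
  - intros x Hx.
    exists (fun n => nth n (D (restr x (S n))) 0).
    set (w := fun n => nth n (D (restr x (S n))) 0).
    assert (Hw : forall n, D (restr x n) = restr w n).
    { induction n.
      - reflexivity.
      - rewrite !restr_S, HD, IHn. f_equal. f_equal. unfold w.
        rewrite restr_S, HD, IHn. rewrite app_nth2; rewrite restr_length; [|lia].
        rewrite Nat.sub_diag. reflexivity. }
    intros n. rewrite <- Hw. apply NNPP. intros HK.
    apply (Hq0 _ (Hx n)). apply WK. auto.
Qed.

Definition Ana {O} (T : list O -> Prop) (X : (nat -> O) -> Prop) : Prop :=
  exists K : list O -> list nat -> Prop, forall x, lim T x ->
    (X x <-> exists w : nat -> nat, forall n, K (restr x n) (restr w n)).

Lemma Ana_ext {O} (T : list O -> Prop) X X' :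
  Ana T X -> (forall x, lim T x -> (X x <-> X' x)) -> Ana T X'.
Proof.
  intros [K HK] H. exists K. intros x Hx. rewrite <- H by auto. auto.
Qed.

Lemma Ana_union {O} (T : list O -> Prop) (F : nat -> (nat -> O) -> Prop) :
  (forall n, Ana T (F n)) -> Ana T (fun x => exists n, F n x).
Proof.
  intros H.
  set (Kf := fun n => proj1_sig (constructive_indefinite_description _ (H n))).
  assert (HKf : forall n x, lim T x -> (F n x <-> exists w : nat -> nat, forall m, Kf n (restr x m) (restr w m))).
  { intros n. exact (proj2_sig (constructive_indefinite_description _ (H n))). }
  exists (fun eta d => match d with [] => True | n :: d' => Kf n (firstn (length d') eta) d' end).
  intros x Hx. split.
  - intros [n Hn]. apply HKf in Hn as [w' Hw']; auto.
    exists (fun i => match i with 0 => n | S i => w' i end).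
    intros [|m]; [exact I|]. rewrite restr_shift. simpl.
    rewrite restr_length, firstn_restr by lia. apply Hw'.
  - intros [w Hw]. exists (w 0). apply HKf; auto. exists (fun i => w (S i)).
    intros m. specialize (Hw (S m)). rewrite restr_shift in Hw. simpl in Hw.
    rewrite restr_length, firstn_restr in Hw by lia. exact Hw.
Qed.

Lemma Ana_inter {O} (T : list O -> Prop) (F : nat -> (nat -> O) -> Prop) :
  (forall n, Ana T (F n)) -> Ana T (fun x => forall n, F n x).
Proof.
  intros H.
  set (Kf := fun n => proj1_sig (constructive_indefinite_description _ (H n))).
  assert (HKf : forall n x, lim T x -> (F n x <-> exists w : nat -> nat, forall m, Kf n (restr x m) (restr w m))).
  { intros n. exact (proj2_sig (constructive_indefinite_description _ (H n))). }
  exists (fun eta d => forall n j, j <= length eta -> (forall i, i < j -> to_nat (n, i) < length d) ->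
     Kf n (firstn j eta) (map (fun i => nth (to_nat (n, i)) d 0) (seq 0 j))).
  intros x Hx. split.
  - intros Hn.
    assert (Hw : forall n, exists w : nat -> nat, forall m, Kf n (restr x m) (restr w m)).
    { intros n. apply HKf; auto. }
    set (wf := fun n => proj1_sig (constructive_indefinite_description _ (Hw n))).
    assert (Hwf : forall n m, Kf n (restr x m) (restr (wf n) m)).
    { intros n. exact (proj2_sig (constructive_indefinite_description _ (Hw n))). }
    exists (fun k => wf (fst (of_nat k)) (snd (of_nat k))).
    intros m n j Hj Hi. rewrite restr_length in Hj. setoid_rewrite restr_length in Hi. rewrite firstn_restr by auto.
    replace (map _ (seq 0 j)) with (restr (wf n) j); [apply Hwf|].
    unfold restr. apply map_ext_in. intros i Hin. apply in_seq in Hin.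
    change (map (fun k => wf (fst (of_nat k)) (snd (of_nat k))) (seq 0 m)) with (restr (fun k => wf (fst (of_nat k)) (snd (of_nat k))) m).
    rewrite nth_restr by (apply Hi; lia). rewrite cancel_of_to. reflexivity.
  - intros [w Hw] n. apply HKf; auto. exists (fun i => w (to_nat (n, i))).
    intros j. destruct (bound_lemma (fun i => to_nat (n, i)) j) as [m [Hm1 Hm2]].
    specialize (Hw m n j). rewrite restr_length, firstn_restr in Hw by auto.
    replace (restr (fun i => w (to_nat (n, i))) j) with (map (fun i => nth (to_nat (n, i)) (restr w m) 0) (seq 0 j)).
    + apply Hw; auto. intros i Hi. rewrite restr_length. auto.
    + unfold restr at 2. apply map_ext_in. intros i Hin. apply in_seq in Hin.
      apply nth_restr. apply Hm2. lia.
Qed.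

Definition compl {O} (T : list O -> Prop) (X : (nat -> O) -> Prop) : (nat -> O) -> Prop :=
  fun x => lim T x /\ ~ X x.

Lemma Borel_Ana {O} (T : list O -> Prop) (B : (nat -> O) -> Prop) :
  Borel T B -> Ana T B /\ Ana T (compl T B).
Proof.
  intros HB. apply (HB (fun X => Ana T X /\ Ana T (compl T X))).
  - intros N. split.
    + exists (fun eta d => match d with [] => True | k :: _ => k < length eta -> N (firstn k eta) end).
      intros x Hx. unfold open_set_of. split.
      * intros [_ [eta [HN [Ht He]]]]. exists (fun _ => length eta).
        intros [|m]; [exact I|]. rewrite restr_shift. cbv beta iota. rewrite restr_length. intros Hl.
        rewrite firstn_restr by lia. rewrite <- He. auto.
      * intros [w Hw]. split; auto. specialize (Hw (S (w 0))). rewrite restr_shift in Hw. cbv beta iota in Hw.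
        rewrite restr_length, firstn_restr in Hw by lia.
        exists (restr x (w 0)). split; [apply Hw; lia|]. split; [apply Hx|].
        unfold is_init. rewrite restr_length. auto.
    + exists (fun eta d => forall k, k <= length eta -> ~ N (firstn k eta)).
      intros x Hx. unfold compl, open_set_of. split.
      * intros [_ Hn]. exists (fun _ => 0). intros m k Hk. rewrite restr_length in Hk.
        rewrite firstn_restr by auto. intros HN. apply Hn. split; auto.
        exists (restr x k). split; auto. split; [apply Hx|]. unfold is_init. rewrite restr_length. auto.
      * intros [w Hw]. split; auto. intros [_ [eta [HN [Ht He]]]].
        apply (Hw (length eta) (length eta)); [rewrite restr_length; auto|].
        rewrite firstn_restr by auto. rewrite <- He. auto.
  - intros A [H1 H2]. split; auto. eapply Ana_ext; [exact H1|].
    intros x Hx. unfold compl. split; [intros Ha; split; auto; tauto|].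
    intros [_ Hn]. apply NNPP. intros Hna. apply Hn. auto.
  - intros F HF. split.
    + apply Ana_union. intros n. apply HF.
    + eapply Ana_ext; [apply (Ana_inter T (fun n => compl T (F n))); intros n; apply HF|].
      intros x Hx. unfold compl. split.
      * intros Hn. split; auto. intros [n Hn']. apply (Hn n). auto.
      * intros [_ Hn] n. split; auto. intros Hf. apply Hn. eauto.
  - intros A A' [H1 H2] Heq. split.
    + eapply Ana_ext; [exact H1|exact Heq].
    + eapply Ana_ext; [exact H2|]. intros x Hx. unfold compl. rewrite Heq by auto. tauto.
Qed.

Lemma branch {O} (T Idef : list O -> Prop) (I : list O -> (list O -> Prop) -> Prop)
  (Sg : list O -> list O -> Prop) :
  tree T -> (forall nu, splitting T Idef I nu -> I nu (Sg nu)) ->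
  (forall nu A B, splitting T Idef I nu -> I nu A -> (forall t, B t -> A t) -> I nu B) ->
  exists x, lim T x /\ forall m, splitting T Idef I (restr x m) -> ~ Sg (restr x m) (restr x (S m)).
Proof.
  intros [[e0 He0] [Hpre Hext]] HS Isub.
  assert (HT0 : T []) by (apply (Hpre [] e0); auto).
  destruct (Hext [] HT0) as [a0 _].
  assert (Hn : forall eta, exists a, T eta -> T (eta ++ [a]) /\
     (splitting T Idef I eta -> ~ Sg eta (eta ++ [a]))).
  { intros eta. destruct (classic (T eta)) as [Ht|Ht]; [|exists a0; tauto].
    destruct (classic (splitting T Idef I eta)) as [Hs|Hs].
    - apply NNPP. intros Hno. destruct Hs as [Ht' [Hid HnI]]. apply HnI.
      apply (Isub eta (Sg eta)); [split; auto| apply HS; split; auto|].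
      intros t [a [-> Ha]]. apply NNPP. intros HnS. apply Hno. exists a. intros _. split; auto.
    - destruct (Hext eta Ht) as [a Ha]. exists a. intros _. split; [auto|tauto]. }
  set (nf := fun eta => proj1_sig (constructive_indefinite_description _ (Hn eta))).
  assert (Hnf : forall eta, T eta -> T (eta ++ [nf eta]) /\
     (splitting T Idef I eta -> ~ Sg eta (eta ++ [nf eta]))).
  { intros eta. exact (proj2_sig (constructive_indefinite_description _ (Hn eta))). }
  set (path := fix path n := match n with 0 => [] | S n => path n ++ [nf (path n)] end).
  set (x := fun n => nf (path n)).
  assert (Hp : forall n, restr x n = path n).
  { induction n; [reflexivity|]. rewrite restr_S, IHn. reflexivity. }
  assert (HpT : forall n, T (path n)).
  { induction n; [exact HT0|]. apply Hnf. auto. }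
  exists x. split.
  - intros n. rewrite Hp. auto.
  - intros m. rewrite !Hp. intros Hs. apply Hnf; auto.
Qed.

Lemma part1 (O L : Type)
  (L_infinite : exists g : nat -> L, forall m n, g m = g n -> m = n)
  (T : list O -> Prop) (Idef : list O -> Prop)
  (Dom : list O -> list O -> Prop) (I : list O -> (list O -> Prop) -> Prop)
  (HT : tagged_tree T Idef Dom I)
  (Hcomp : tagged_complete L T Idef I) :
  (forall B : L -> (nat -> O) -> Prop,
     (forall a, Borel T (B a)) ->
     (forall x, lim T x -> exists a, B a x) ->
     exists a, exists T' : list O -> Prop,
       tree T' /\ le_star T Idef I T' /\ (forall x, lim T' x -> B a x)).
Proof.
  intros B HB Hcov.
  destruct L_infinite as [g Hg].
  destruct HT as [Htree HTI].
  assert (Hid : forall nu, splitting T Idef I nu -> ideal (Dom nu) (I nu)).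
  { intros nu [Ht [Hd _]]. apply HTI; auto. }
  assert (Isub : forall nu A B, splitting T Idef I nu -> I nu A -> (forall t, B t -> A t) -> I nu B).
  { intros nu A B' Hs HA HBA. destruct (Hid nu Hs) as [_ [_ [H _]]]. eauto. }
  assert (Iun : forall nu A B, splitting T Idef I nu -> I nu A -> I nu B -> I nu (fun t => A t \/ B t)).
  { intros nu A B' Hs HA HB'. destruct (Hid nu Hs) as [_ [_ [_ [H _]]]]. eauto. }
  assert (Iemp : forall nu, splitting T Idef I nu -> I nu (fun _ => False)).
  { intros nu Hs. pose proof Hs as [Ht [Hd _]].
    pose proof (Hcomp nu Ht Hd Empty_set (fun e => match e with end)
      ltac:(intros [] ) (fun e => match e with end) (fun e => match e with end)) as H.
    apply (Isub nu _ _ Hs H). intros t []. }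
  assert (HT0 : T []).
  { destruct Htree as [[e He] [Hpre _]]. apply (Hpre [] e). auto. }
  assert (HA : forall a, Ana T (B a)) by (intros a; apply Borel_Ana; auto).
  set (Kf := fun a => proj1_sig (constructive_indefinite_description _ (HA a))).
  assert (HKf : forall a x, lim T x -> (B a x <-> exists w : nat -> nat, forall n, Kf a (restr x n) (restr w n))).
  { intros a. exact (proj2_sig (constructive_indefinite_description _ (HA a))). }
  destruct (classic (exists a, ~ Wg T Idef I (Kf a) [] [])) as [[a Ha]|Hall].
  - destruct (B_side T Idef I (Kf a) (proj1 (proj2 Htree)) HT0 Ha) as [T' [Ht' [Hle Hbr]]].
    exists a, T'. split; [auto|split; auto].
    intros x Hx. assert (HxT : lim T x) by (intros n; apply (proj1 Hle); apply Hx).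
    apply HKf; auto.
  - assert (Hs : forall a, exists s, Ival T Idef I s /\ wins T Idef I (Kf a) s [] []).
    { intros a. apply (A_side T Idef Dom I (Kf a) Iemp Isub Iun). apply NNPP. intros Hn. apply Hall. eauto. }
    set (sf := fun a => proj1_sig (constructive_indefinite_description _ (Hs a))).
    assert (Hsf : forall a, Ival T Idef I (sf a) /\ wins T Idef I (Kf a) (sf a) [] []).
    { intros a. exact (proj2_sig (constructive_indefinite_description _ (Hs a))). }
    set (Sg := fun nu t => exists a, exists d, sf a nu d t).
    assert (HSg : forall nu, splitting T Idef I nu -> I nu (Sg nu)).
    { intros nu Hsp. pose proof Hsp as [Ht [Hd _]].
      apply (Hcomp nu Ht Hd L (fun a => a) (fun a b H => H)).
      intros a. apply (Hcomp nu Ht Hd (list nat) (fun d => g (enc d))).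
      - intros d d' H. apply enc_inj, Hg, H.
      - intros d. apply (proj1 (Hsf a)). auto. }
    destruct (branch T Idef I Sg Htree HSg Isub) as [x [Hx Hc]].
    destruct (Hcov x Hx) as [a Ha]. apply HKf in Ha as [w Hw]; auto.
    destruct (proj2 (Hsf a) x w 0 Hx eq_refl eq_refl) as [m [_ Hm]].
    + intros m _ Hsp Hin. apply (Hc m Hsp). exists a, (restr w m). auto.
    + exfalso. apply Hm, Hw.
Qed.

Theorem lemma1p7 (O L : Type)
  (L_infinite : exists g : nat -> L, forall m n, g m = g n -> m = n)
  (T : list O -> Prop) (Idef : list O -> Prop)
  (Dom : list O -> list O -> Prop) (I : list O -> (list O -> Prop) -> Prop)
  (HT : tagged_tree T Idef Dom I)
  (Hcomp : tagged_complete L T Idef I) :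
  (forall B : L -> (nat -> O) -> Prop,
     (forall a, Borel T (B a)) ->
     (forall x, lim T x -> exists a, B a x) ->
     exists a, exists T' : list O -> Prop,
       tree T' /\ le_star T Idef I T' /\ (forall x, lim T' x -> B a x))
  /\
  (forall (Y : Type) (H : (nat -> O) -> Y),
     (exists g : Y -> L, forall x x', lim T x -> lim T x' ->
        g (H x) = g (H x') -> H x = H x') ->
     (forall y, Borel T (fun x => H x = y)) ->
     exists T' : list O -> Prop,
       tree T' /\ le_star T Idef I T' /\
       (forall x x', lim T' x -> lim T' x' -> H x = H x')).
Proof.
  split; [apply (part1 O L L_infinite T Idef Dom I HT Hcomp)|].
  intros Y H [g Hg] HBor.
  destruct (part1 O L L_infinite T Idef Dom I HT Hcomp (fun a x => g (H x) = a)) as [a [T' [Ht' [Hle Hb]]]].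
  - intros a S h1 h2 h3 h4.
    destruct (classic (exists x0, lim T x0 /\ g (H x0) = a)) as [[x0 [Hx0 Ha]]|Hn].
    + apply h4 with (A := fun x => H x = H x0); [apply (HBor (H x0) S h1 h2 h3 h4)|].
      intros x Hx. split; [intros E; rewrite E; auto|].
      intros E. apply Hg; auto. congruence.
    + apply h4 with (A := open_set_of T (fun _ => False)); [apply h1|].
      intros x Hx. unfold open_set_of. split.
      * intros [_ [eta [[] _]]].
      * intros E. exfalso. apply Hn. eauto.
  - intros x Hx. eauto.
  - exists T'. split; [auto|split; auto].
    intros x x' Hx Hx'.
    assert (HxT : forall z, lim T' z -> lim T z) by (intros z Hz n; apply (proj1 Hle); apply Hz).
    apply Hg; auto. rewrite (Hb x Hx), (Hb x' Hx'). reflexivity.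
Qed.
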